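(* Let $k\ge3$ and let $\mathcal S=\sum_{\alpha\ge k}\Psi^{(\alpha)}\,\partial/\partial\psi^{(\alpha)}$ be a symmetry of $\mathcal E_*$ (an invisible symmetry of depth $k$), i.e. $[\mathcal S,D^{( * )}_x]=[\mathcal S,D^{( * )}_y]=0$, with $\Psi^{(\alpha)}$ smooth functions on $\mathcal E_*$. Then $\Psi^{(k)}$ and $\Psi^{(k+1)}$ are constants. In particular, if $\Psi^{(k)}\neq0$, then after multiplication by a nonzero constant $$\mathcal S=\frac{\partial}{\partial\psi^{(k)}}+\gamma\frac{\partial}{\partial\psi^{(k+1)}}+\sum_{\alpha\ge k+2}\Psi^{(\alpha)}\frac{\partial}{\partial\psi^{(\alpha)}},\qquad\gamma\in\mathbb R.$$
   Context: Let $\mathcal E_1$ be the system $u_y+vu_x=\frac1{v-u}$, $v_y+uv_x=\frac1{u-v}$ with internal coordinates $x,y,u_i=\partial^iu/\partial x^i$, $v_i=\partial^iv/\partial x^i$ ($i\ge0$) and total derivatives $D_x=\partial_x+\sum_i(u_{i+1}\partial_{u_i}+v_{i+1}\partial_{v_i})$, $D_y=\partial_y+\sum_i\big(D_x^i(\tfrac1{v-u}-vu_1)\partial_{u_i}+D_x^i(\tfrac1{u-v}-uv_1)\partial_{v_i}\big)$. Let $\sigma_m=\sum_{i+j=m}u^iv^j$, $\psi^{(1)}=y$, $\psi^{(2)}=x$, and for $k\ge2$ put $X^{(k)}=\sigma_{k-2}-\sum_{i=1}^{k-3}i\,\sigma_{k-i-3}\psi^{(i)}$, for $k\ge3$ put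 $Y^{(k)}=-uv\,X^{(k-1)}-(k-2)\psi^{(k-2)}$. The space $\mathcal E_*$ has coordinates $x,y,u_i,v_i$ and $\psi^{(k)}$, $k\ge3$, with commuting total derivatives $D^{( * )}_x=D_x+\sum_{k\ge3}X^{(k)}\partial/\partial\psi^{(k)}$, $D^{( * )}_y=D_y+\sum_{k\ge3}Y^{(k)}\partial/\partial\psi^{(k)}$. Functions on $\mathcal E_*$ depend on finitely many coordinates. *)

(* Defs.v *)
From Stdlib Require List.
From HB Require Import structures.
From mathcomp Require Import all_boot all_order all_algebra.
From mathcomp Require Import all_classical all_reals all_analysis.
Set Implicit Arguments. Unset Strict Implicit. Unset Printing Implicit Defensive.
Import Order.TTheory GRing.Theory Num.Theory.
Import numFieldNormedType.Exports.
Local Open Scope classical_set_scope.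
Local Open Scope ring_scope.

(* Coordinates of E_* : x, y, u_i, v_i (i >= 0), and psi^(a+3) encoded as Psic a. *)
Inductive Coord : Type :=
| Cx : Coord | Cy : Coord | Cu : nat -> Coord | Cv : nat -> Coord | Cpsi : nat -> Coord.

Scheme Equality for Coord.

Section Defs.
Variable R : realType.

Definition Pt := Coord -> R.

(* domain of E_*: u <> v (the system involves 1/(v-u)) *)
Definition Dom (p : Pt) : Prop := p (Cu 0) <> p (Cv 0).

Definition shift (p : Pt) (c : Coord) (t : R) : Pt :=
  fun c' => if Coord_eq_dec c' c then p c' + t else p c'.

Definition pd (c : Coord) (F : Pt -> R) : Pt -> R :=
  fun p => derive1 (fun t => F (shift p c t)) 0.

Definition iterD n (vs : seq 'rV[R]_n) (g : 'rV[R]_n -> R) : 'rV[R]_n -> R :=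
  foldr (fun v h => fun x => 'D_v h x) g vs.

Definition smooth_on n (U : set 'rV[R]_n) (g : 'rV[R]_n -> R) : Prop :=
  forall (vs : seq 'rV[R]_n) (x : 'rV[R]_n), U x ->
    {for x, continuous (iterD vs g)} /\ (forall v, derivable (iterD vs g) x v).

Definition restr (cs : seq Coord) (p : Pt) : 'rV[R]_(size cs) :=
  \row_(i < size cs) p (nth Cx cs i).

Definition smoothfun (F : Pt -> R) : Prop :=
  exists cs : seq Coord, List.NoDup cs /\
  exists g : 'rV[R]_(size cs) -> R,
    (forall p, Dom p -> F p = g (restr cs p)) /\
    smooth_on [set w | exists2 p, Dom p & w = restr cs p] g.

Definition sigma (m : nat) (p : Pt) : R :=
  \sum_(i < m.+1) p (Cu 0) ^+ i * p (Cv 0) ^+ (m - i).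

Definition psi (k : nat) (p : Pt) : R :=
  match k with 1 => p Cy | 2 => p Cx | _ => p (Cpsi (k - 3)) end.

Definition Xc (k : nat) (p : Pt) : R :=
  sigma (k - 2) p - \sum_(1 <= i < k - 2) i%:R * sigma (k - i - 3) p * psi i p.

Definition Yc (k : nat) (p : Pt) : R :=
  - (p (Cu 0) * p (Cv 0)) * Xc k.-1 p - (k - 2)%:R * psi (k - 2) p.

Definition Dx0 (F : Pt -> R) : Pt -> R := fun p =>
  pd Cx F p
  + limn (fun N => \sum_(i < N)
        (p (Cu i.+1) * pd (Cu i) F p + p (Cv i.+1) * pd (Cv i) F p)).

Definition fu (p : Pt) : R := 1 / (p (Cv 0) - p (Cu 0)) - p (Cv 0) * p (Cu 1).
Definition fv (p : Pt) : R := 1 / (p (Cu 0) - p (Cv 0)) - p (Cu 0) * p (Cv 1).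

Definition DxS (F : Pt -> R) : Pt -> R := fun p =>
  Dx0 F p + limn (fun N => \sum_(a < N) Xc (a + 3)%N p * pd (Cpsi a) F p).

Definition DyS (F : Pt -> R) : Pt -> R := fun p =>
  pd Cy F p
  + limn (fun N => \sum_(i < N)
        (iter i Dx0 fu p * pd (Cu i) F p + iter i Dx0 fv p * pd (Cv i) F p))
  + limn (fun N => \sum_(a < N) Yc (a + 3)%N p * pd (Cpsi a) F p).

Definition Sact (Psi : nat -> Pt -> R) (F : Pt -> R) : Pt -> R := fun p =>
  limn (fun N => \sum_(a < N) Psi (a + 3)%N p * pd (Cpsi a) F p).

End Defs.

(* Main.v *)
Require Import Defs.
From HB Require Import structures.
From mathcomp Require Import all_boot all_order all_algebra.
From mathcomp Require Import all_classical all_reals all_analysis.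
From mathcomp Require Import ring lra zify.
Import Order.TTheory GRing.Theory Num.Theory.
Import numFieldNormedType.Exports.
Local Open Scope classical_set_scope.
Local Open Scope ring_scope.
Set Implicit Arguments. Unset Strict Implicit.


Section Basic.
Variable R : realType.
Implicit Types (p q : Pt R) (c : Coord).

Lemma dshiftE p c t c' : Defs.shift p c t c' = if Coord_eq_dec c' c then p c' + t else p c'.
Proof. by []. Qed.

Lemma dshift_eq p c t : Defs.shift p c t c = p c + t.
Proof. by rewrite dshiftE; case: Coord_eq_dec. Qed.

Lemma dshift_ne p c t c' : c' <> c -> Defs.shift p c t c' = p c'.
Proof. by rewrite dshiftE; case: Coord_eq_dec. Qed.

Lemma dshift0 p c : Defs.shift p c 0 = p.
Proof. by apply: funext => c'; rewrite dshiftE; case: Coord_eq_dec => [E|E]; rewrite ?addr0. Qed.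

Lemma dshiftC p c1 t1 c2 t2 :
  Defs.shift (Defs.shift p c1 t1) c2 t2 = Defs.shift (Defs.shift p c2 t2) c1 t1.
Proof.
apply: funext => c'; rewrite !dshiftE.
by case: Coord_eq_dec => [E1|E1]; case: Coord_eq_dec => [E2|E2] //; rewrite addrAC.
Qed.

Lemma dshiftD p c s t : Defs.shift (Defs.shift p c s) c t = Defs.shift p c (s + t).
Proof.
by apply: funext => c'; rewrite !dshiftE; case: Coord_eq_dec => [E|E] //; rewrite addrA.
Qed.

Lemma dom_shift p c t : c <> Cu 0 -> c <> Cv 0 -> Dom (Defs.shift p c t) <-> Dom p.
Proof.
move=> h1 h2; have n1 : Cu 0 <> c by move=> E; apply: h1.
have n2 : Cv 0 <> c by move=> E; apply: h2.
by rewrite /Dom !dshift_ne.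
Qed.

Lemma dom_near p c : Dom p -> \forall r \near (0:R), Dom (Defs.shift p c r).
Proof.
move=> hp.
have e0 : 0 < `|p (Cu 0) - p (Cv 0)| by rewrite normr_gt0 subr_eq0; apply/eqP.
near=> r.
have hr : `|r| < `|p (Cu 0) - p (Cv 0)| by near: r; exact: (@nbhs0_lt R R _ e0).
rewrite /Dom.
case: (Coord_eq_dec c (Cu 0)) => [->|h1].
  rewrite dshift_eq dshift_ne // => E.
  have : `|r| = `|p (Cu 0) - p (Cv 0)| by rewrite -E opprD addrA subrr add0r normrN.
  by move=> E'; move: hr; rewrite E' ltxx.
case: (Coord_eq_dec c (Cv 0)) => [->|h2].
  rewrite dshift_eq dshift_ne // => E.
  have : `|r| = `|p (Cu 0) - p (Cv 0)| by rewrite E addrAC subrr add0r.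
  by move=> E'; move: hr; rewrite E' ltxx.
by rewrite !dshift_ne // => E; subst c; [case: h1 | case: h2].
Unshelve. all: by end_near. Qed.

Lemma limn_fin (f : nat -> R) B : (forall i, (B <= i)%N -> f i = 0) ->
  limn (fun N => \sum_(i < N) f i) = \sum_(i < B) f i.
Proof.
move=> hf; apply: (lim_near_cst (@Rhausdorff R)); near=> N.
have hN : (B <= N)%N by near: N; apply: nbhs_infty_ge.
rewrite -!(big_mkord xpredT) (@big_cat_nat _ _ _ B 0 N _ _ (leq0n B) hN) /=.
have -> : \sum_(B <= i < N) f i = 0.
  by rewrite big_nat_cond big1 // => i /andP[/andP[Hi _] _]; exact: hf.
by rewrite addr0.
Unshelve. all: by end_near. Qed.

Lemma sum_if (F : nat -> R) B i : (i < B)%N ->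
  \sum_(j < B) (if (j:nat) == i then F j else 0) = F i.
Proof.
move=> hi; rewrite (bigD1 (Ordinal hi)) //= eqxx big1 ?addr0 // => j hj.
case: eqP => // E; move: hj; by rewrite -(inj_eq val_inj) /= E eqxx.
Qed.

End Basic.


Section Core1.
Variable R : realType.
Implicit Types (p q : Pt R) (c : Coord).

Definition ev (cs : seq Coord) c : 'rV[R]_(size cs) :=
  \row_i (if Coord_eq_dec (nth Cx cs i) c then 1 else 0).

Lemma restr_shift cs p c t :
  restr cs (Defs.shift p c t) = restr cs p + t *: ev cs c.
Proof.
apply/rowP => i; rewrite !mxE dshiftE.
by case: Coord_eq_dec => [E|E]; rewrite ?mulr1 ?mulr0 ?addr0.
Qed.

Lemma pd_near_eq (F1 F2 : Pt R -> R) p1 p2 c :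
  (\forall r \near (0:R), F1 (Defs.shift p1 c r) = F2 (Defs.shift p2 c r)) ->
  pd c F1 p1 = pd c F2 p2.
Proof. by move=> h; rewrite /pd !derive1E; exact: near_eq_derive. Qed.

Lemma D1_shift (f : R -> R) s : 'D_1 (fun r => f (s + r)) 0 = 'D_1 f s.
Proof.
rewrite /derive /=; set d := (fun _ : R => _); set d' := (fun _ : R => _).
suff -> : d = d' by [].
by apply/funext => h; rewrite /d /d' /= !addr0 (addrC s).
Qed.

Lemma nth_In (cs : seq Coord) i : (i < size cs)%N -> List.In (nth Cx cs i) cs.
Proof.
elim: cs i => [|c cs IH] [|i] //= h; first by left.
by right; apply: IH.
Qed.

Lemma ev_notin cs c : ~ List.In c cs -> ev cs c = 0.
Proof.
move=> h; apply/rowP => i; rewrite !mxE; case: Coord_eq_dec => // E.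
by case: h; rewrite -E; apply: nth_In.
Qed.

Definition cidx c : nat := match c with Cu j | Cv j | Cpsi j => j.+1 | _ => 0 end.
Definition bnd (cs : seq Coord) : nat := foldr (fun c m => maxn (cidx c) m) 0%N cs.

Lemma bnd_In cs c : List.In c cs -> (cidx c <= bnd cs)%N.
Proof.
elim: cs => [|c' cs IH] //= [->|h]; first exact: leq_maxl.
by apply: leq_trans (IH h) (leq_maxr _ _).
Qed.

Lemma notin_bnd cs c : (bnd cs < cidx c)%N -> ~ List.In c cs.
Proof. by move=> h /bnd_In h'; move: (leq_ltn_trans h' h); rewrite ltnn. Qed.

Lemma domu p s : Dom (Defs.shift p (Cu 0) s) <-> p (Cu 0) + s <> p (Cv 0).
Proof. by rewrite /Dom dshift_eq dshift_ne. Qed.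

Lemma domv p s : Dom (Defs.shift p (Cv 0) s) <-> p (Cu 0) <> p (Cv 0) + s.
Proof. by rewrite /Dom dshift_eq dshift_ne. Qed.

Lemma psi_ext p q i : p Cx = q Cx -> p Cy = q Cy ->
  (forall a, p (Cpsi a) = q (Cpsi a)) -> psi i p = psi i q.
Proof. by move=> h1 h2 h3; case: i => [|[|[|i]]] /=; rewrite ?h1 ?h2 ?h3. Qed.

Lemma sigma_ext m p q : p (Cu 0) = q (Cu 0) -> p (Cv 0) = q (Cv 0) ->
  sigma m p = sigma m q.
Proof. by move=> h1 h2; rewrite /sigma h1 h2. Qed.

Lemma Xc_ext k p q : p (Cu 0) = q (Cu 0) -> p (Cv 0) = q (Cv 0) ->
  (forall i, psi i p = psi i q) -> Xc k p = Xc k q.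
Proof.
move=> h1 h2 h3; rewrite /Xc !(sigma_ext _ h1 h2); congr (_ - _).
by apply: eq_bigr => i _; rewrite (sigma_ext _ h1 h2) h3.
Qed.

Lemma sum_bump (a a' A : nat -> R) B i : (i < B)%N -> a' i = a i + 1 ->
  (forall j, j != i -> a' j = a j) ->
  \sum_(j < B) a' j * A j = \sum_(j < B) a j * A j + A i.
Proof.
move=> hi h1 h2; rewrite -(sum_if A hi) -big_split /=; apply: eq_bigr => j _.
case: eqP => [->|/eqP hj]; first by rewrite h1 mulrDl mul1r.
by rewrite h2 // addr0.
Qed.

Definition sigP (v : R) (m : nat) : {poly R} := \sum_(i < m.+1) (v ^+ (m - i)) *: 'X^i.

Lemma sigP_horner v u m : (sigP v m).[u] = \sum_(i < m.+1) u ^+ i * v ^+ (m - i).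
Proof. by rewrite /sigP horner_sum; apply: eq_bigr => i _; rewrite hornerZ hornerXn mulrC. Qed.

Lemma sigP_coef v m j : (sigP v m)`_j = if (j <= m)%N then v ^+ (m - j) else 0.
Proof.
rewrite /sigP coef_sum.
under eq_bigr do rewrite coefZ coefXn.
case: leqP => hj.
- rewrite -(@sum_if _ (fun i => v ^+ (m - i)) m.+1 j) ?ltnS //.
  apply: eq_bigr => i _; rewrite eq_sym; case: eqP => [->|_]; by rewrite ?mulr1 ?mulr0.
- apply: big1 => i _.
  have hi : (i < j)%N by apply: leq_trans (ltn_ord i) hj.
  by rewrite gtn_eqF // mulr0.
Qed.

Definition XP p (b : nat) : {poly R} :=
  sigP (p (Cv 0)) b.+1 - \sum_(1 <= i < b.+1) (i%:R * psi i p) *: sigP (p (Cv 0)) (b - i).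

Definition setu p u := Defs.shift p (Cu 0) (u - p (Cu 0)).

Lemma setu_u p u : setu p u (Cu 0) = u.
Proof. by rewrite /setu dshift_eq addrC subrK. Qed.

Lemma setu_v p u : setu p u (Cv 0) = p (Cv 0).
Proof. by rewrite /setu dshift_ne. Qed.

Lemma psi_setu p u i : psi i (setu p u) = psi i p.
Proof. by apply: psi_ext; rewrite /setu ?dshift_ne // => a; rewrite dshift_ne. Qed.

Lemma sigma_setu p u m : sigma m (setu p u) = (sigP (p (Cv 0)) m).[u].
Proof. by rewrite sigP_horner /sigma setu_u setu_v. Qed.

Lemma XP_horner p b u : (XP p b).[u] = Xc (b + 3) (setu p u).
Proof.
rewrite /XP /Xc hornerD hornerN.
have -> : (b + 3 - 2 = b.+1)%N by lia.
rewrite sigma_setu; congr (_ - _); rewrite horner_sum.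
apply: eq_big_nat => i /andP[h1 h2].
have -> : (b + 3 - i - 3 = b - i)%N by lia.
by rewrite hornerZ sigma_setu psi_setu mulrAC.
Qed.

Lemma XP_coef_top p b : (XP p b)`_b.+1 = 1.
Proof.
rewrite /XP coefB sigP_coef coef_sum leqnn subnn expr0 big1 ?subr0 // => i _.
by rewrite coefZ sigP_coef ltnNge leq_subr /= mulr0.
Qed.

Lemma XP_coef_hi p b j : (b.+1 < j)%N -> (XP p b)`_j = 0.
Proof.
move=> hj; rewrite /XP coefB sigP_coef coef_sum leqNgt hj /= big1 ?subr0 // => i _.
rewrite coefZ sigP_coef.
have -> : (j <= b - i)%N = false by apply/negbTE; rewrite -ltnNge; lia.
by rewrite mulr0.
Qed.

Section WithG.
Variables (G : Pt R -> R) (cs : seq Coord) (g : 'rV[R]_(size cs) -> R).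
Hypothesis hG : forall p, Dom p -> G p = g (restr cs p).
Hypothesis hder : forall p v, Dom p -> derivable g (restr cs p) v.

Definition phi p c (r : R) := g (restr cs p + r *: ev cs c).

Lemma G_shift p c r : Dom (Defs.shift p c r) -> G (Defs.shift p c r) = phi p c r.
Proof. by move=> h; rewrite hG // restr_shift. Qed.

Lemma phi_shift p c s r : phi (Defs.shift p c s) c r = phi p c (s + r).
Proof. by rewrite /phi restr_shift -addrA -scalerDl. Qed.

Lemma phi_der p c s : Dom (Defs.shift p c s) -> derivable (phi p c) s 1.
Proof.
move=> h; have := @hder _ (ev cs c) h; rewrite restr_shift => /derivable1P hd.
apply/derivable1P; set f1 := (fun _ => _) in hd; set f2 := (fun _ => _).
suff -> : f2 = f1 by [].
apply/funext => r; rewrite /f1 /f2 /phi; congr g.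
by rewrite [r *: 1]mulr1 scalerDl addrCA addrC.
Qed.

Lemma pd_phi p c s : Dom (Defs.shift p c s) ->
  pd c G (Defs.shift p c s) = 'D_1 (phi p c) s.
Proof.
move=> h; rewrite /pd derive1E.
transitivity ('D_1 (fun r => phi p c (s + r)) 0); last exact: D1_shift.
apply: near_eq_derive.
near=> r; rewrite dshiftD G_shift //; rewrite -dshiftD.
near: r; exact: dom_near.
Unshelve. all: by end_near. Qed.

Lemma pd_phi0 p c : Dom p -> pd c G p = 'D_1 (phi p c) 0.
Proof. by move=> h; have := @pd_phi p c 0; rewrite dshift0; apply. Qed.

Definition Z c := forall q, Dom q -> pd c G q = 0.

Lemma Z_notin c : ~ List.In c cs -> Z c.
Proof.
move=> h q hq; rewrite pd_phi0 //.
have -> : phi q c = cst (g (restr cs q)).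
  by apply/funext => r; rewrite /phi ev_notin // scaler0 addr0.
exact: derive_cst.
Qed.

Lemma L3pos c p t : Z c -> Dom p -> 0 <= t ->
  (forall s, 0 <= s <= t -> Dom (Defs.shift p c s)) ->
  G (Defs.shift p c t) = G p.
Proof.
move=> hz hp ht hpath.
rewrite G_shift; last by apply: hpath; rewrite ht lexx.
have -> : G p = phi p c 0.
  by rewrite -{1}(dshift0 p c) G_shift // dshift0.
have hd : {in `[0, t], forall x, derivable (phi p c) x 1}.
  move=> x; rewrite in_itv /= => hx; apply: phi_der; exact: hpath.
have [x0 hx0 E] := @MVT_segment R (phi p c) ('D_1 (phi p c)) 0 t ht
  (fun x hx => derivableP (hd x (subset_itv_oo_cc hx)))
  (derivable_within_continuous hd).
move: hx0; rewrite in_itv /= => hx0.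
have : 'D_1 (phi p c) x0 = 0 by rewrite -pd_phi ?hz //; apply: hpath.
by move=> h0; move: E; rewrite h0 mul0r => /eqP; rewrite subr_eq0 => /eqP.
Qed.


Lemma Lgen c p t : Z c -> Dom p ->
  (forall s, (0 <= s <= t) \/ (t <= s <= 0) -> Dom (Defs.shift p c s)) ->
  G (Defs.shift p c t) = G p.
Proof.
move=> hz hp hpath; case: (lerP 0 t) => ht.
  by apply: L3pos => // s hs; apply: hpath; left.
set p' := Defs.shift p c t.
have hp' : Dom p' by apply: hpath; right; rewrite lexx ltW.
have <- : Defs.shift p' c (- t) = p by rewrite /p' dshiftD subrr dshift0.
symmetry; apply: L3pos => //; first by rewrite oppr_ge0 ltW.
move=> s /andP[h1 h2]; rewrite /p' dshiftD; apply: hpath; right.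
apply/andP; split; lra.
Qed.

Lemma inv_gen c p t : c <> Cu 0 -> c <> Cv 0 -> Z c -> Dom p ->
  G (Defs.shift p c t) = G p.
Proof. by move=> h1 h2 hz hp; apply: Lgen => // s _; apply/dom_shift. Qed.

Lemma inv_u0 p t : Z (Cu 0) -> Dom p ->
  (p (Cu 0) < p (Cv 0) /\ p (Cu 0) + t < p (Cv 0)) \/
  (p (Cv 0) < p (Cu 0) /\ p (Cv 0) < p (Cu 0) + t) ->
  G (Defs.shift p (Cu 0) t) = G p.
Proof.
move=> hz hp hs; apply: Lgen => // s hs'; apply/domu => E.
by case: hs => [[a b]|[a b]]; case: hs' => /andP[c d]; lra.
Qed.

Lemma DxS_fin p : Dom p ->
  DxS G p = pd Cx G p
   + \sum_(i < bnd cs) (p (Cu i.+1) * pd (Cu i) G p + p (Cv i.+1) * pd (Cv i) G p)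
   + \sum_(a < bnd cs) Xc (a + 3)%N p * pd (Cpsi a) G p.
Proof.
move=> hp.
have hu : forall i, (bnd cs <= i)%N -> pd (Cu i) G p = 0.
  by move=> i hi; apply: Z_notin => //; apply: notin_bnd => /=; rewrite ltnS.
have hv : forall i, (bnd cs <= i)%N -> pd (Cv i) G p = 0.
  by move=> i hi; apply: Z_notin => //; apply: notin_bnd => /=; rewrite ltnS.
have hs : forall i, (bnd cs <= i)%N -> pd (Cpsi i) G p = 0.
  by move=> i hi; apply: Z_notin => //; apply: notin_bnd => /=; rewrite ltnS.
rewrite /DxS /Dx0 (@limn_fin _ (fun i => p (Cu i.+1) * pd (Cu i) G p + p (Cv i.+1) * pd (Cv i) G p) (bnd cs)); last first.
  by move=> i hi; rewrite hu // hv // !mulr0 addr0.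
rewrite (@limn_fin _ (fun a => Xc (a + 3)%N p * pd (Cpsi a) G p) (bnd cs)) // => i hi; by rewrite hs // mulr0.
Qed.

Lemma stepA i : (forall q, Dom q -> DxS G q = 0) ->
  (forall j, (i < j)%N -> Z (Cu j) /\ Z (Cv j)) -> Z (Cu i) /\ Z (Cv i).
Proof.
move=> hD hj.
case: (leqP (bnd cs) i) => hi.
  by split; apply: Z_notin; apply: notin_bnd => /=; rewrite ltnS.
have [zu zv] := hj i.+1 (ltnSn i).
have Xe : forall t a q j, Xc a (Defs.shift q (Cu j.+1) t) = Xc a q /\
                          Xc a (Defs.shift q (Cv j.+1) t) = Xc a q.
  move=> t a q j; split; apply: Xc_ext; rewrite ?dshift_ne //;
  by move=> i0; apply: psi_ext; rewrite ?dshift_ne // => a'; rewrite dshift_ne.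
split => p hp.
- set p' := Defs.shift p (Cu i.+1) 1.
  have hp' : Dom p' by apply/dom_shift.
  have hpd : forall c, pd c G p' = pd c G p.
    move=> c; apply: pd_near_eq; near=> r.
    rewrite /p' dshiftC inv_gen //; near: r; exact: dom_near.
  have := hD p' hp'; rewrite DxS_fin //.
  have -> : \sum_(a < bnd cs) Xc (a+3)%N p' * pd (Cpsi a) G p' =
            \sum_(a < bnd cs) Xc (a+3)%N p * pd (Cpsi a) G p.
    by apply: eq_bigr => a _; rewrite hpd (Xe _ _ _ _).1.
  have -> : \sum_(j < bnd cs) (p' (Cu j.+1) * pd (Cu j) G p' + p' (Cv j.+1) * pd (Cv j) G p')
     = \sum_(j < bnd cs) (p (Cu j.+1) * pd (Cu j) G p + p (Cv j.+1) * pd (Cv j) G p)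
       + pd (Cu i) G p.
    rewrite !big_split /=.
    under eq_bigr do rewrite hpd.
    under [X in _ + X = _]eq_bigr do rewrite hpd /p' dshift_ne //.
    rewrite (@sum_bump (fun j => p (Cu j.+1)) (fun j => p' (Cu j.+1))
              (fun j => pd (Cu j) G p) _ _ hi); first by rewrite addrAC.
      by rewrite /p' dshift_eq.
    move=> j hji; rewrite /p' dshift_ne // => -[E]; move: hji; by rewrite E eqxx.
  rewrite hpd => h1; have := hD p hp; rewrite DxS_fin // => h2; lra.
- set p' := Defs.shift p (Cv i.+1) 1.
  have hp' : Dom p' by apply/dom_shift.
  have hpd : forall c, pd c G p' = pd c G p.
    move=> c; apply: pd_near_eq; near=> r.
    rewrite /p' dshiftC inv_gen //; near: r; exact: dom_near.
  have := hD p' hp'; rewrite DxS_fin //.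
  have -> : \sum_(a < bnd cs) Xc (a+3)%N p' * pd (Cpsi a) G p' =
            \sum_(a < bnd cs) Xc (a+3)%N p * pd (Cpsi a) G p.
    by apply: eq_bigr => a _; rewrite hpd (Xe _ _ _ _).2.
  have -> : \sum_(j < bnd cs) (p' (Cu j.+1) * pd (Cu j) G p' + p' (Cv j.+1) * pd (Cv j) G p')
     = \sum_(j < bnd cs) (p (Cu j.+1) * pd (Cu j) G p + p (Cv j.+1) * pd (Cv j) G p)
       + pd (Cv i) G p.
    rewrite !big_split /=.
    under eq_bigr do rewrite hpd /p' dshift_ne //.
    under [X in _ + X = _]eq_bigr do rewrite hpd.
    rewrite (@sum_bump (fun j => p (Cv j.+1)) (fun j => p' (Cv j.+1))
              (fun j => pd (Cv j) G p) _ _ hi); first by rewrite addrA.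
      by rewrite /p' dshift_eq.
    move=> j hji; rewrite /p' dshift_ne // => -[E]; move: hji; by rewrite E eqxx.
  rewrite hpd => h1; have := hD p hp; rewrite DxS_fin // => h2; lra.
Unshelve. all: by end_near. Qed.

Lemma stepA_all : (forall q, Dom q -> DxS G q = 0) ->
  forall i, Z (Cu i) /\ Z (Cv i).
Proof.
move=> hD.
suff H : forall n i, (bnd cs <= i + n)%N -> Z (Cu i) /\ Z (Cv i).
  by move=> i; apply: (H (bnd cs)); rewrite leq_addl.
elim=> [|n IH] i hi.
  by rewrite addn0 in hi; split; apply: Z_notin; apply: notin_bnd => /=; rewrite ltnS.
apply: stepA => // j hj; apply: IH; lia.
Qed.

Lemma stepC a : (forall q, Dom q -> DxS G q = 0) -> (forall i, Z (Cu i) /\ Z (Cv i)) ->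
  (forall b, (a < b)%N -> Z (Cpsi b)) -> Z (Cpsi a).
Proof.
move=> hD hJ hb.
case: (leqP (bnd cs) a) => ha.
  by apply: Z_notin; apply: notin_bnd => /=; rewrite ltnS.
move=> p hp.
set P : {poly R} := (pd Cx G p)%:P + \sum_(b < bnd cs) pd (Cpsi b) G p *: XP p b.
have hroot : forall u, (p (Cu 0) < p (Cv 0) /\ u < p (Cv 0)) \/
                       (p (Cv 0) < p (Cu 0) /\ p (Cv 0) < u) -> P.[u] = 0.
  move=> u hu.
  have hq : Dom (setu p u).
    by rewrite /Dom setu_u setu_v => E; case: hu => [[h1 h2]|[h1 h2]]; lra.
  have hpd : forall c, c <> Cu 0 -> c <> Cv 0 -> pd c G (setu p u) = pd c G p.
    move=> c n1 n2; apply: pd_near_eq; near=> r.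
    rewrite /setu dshiftC inv_u0 //; first exact: (hJ 0).1.
      by apply/dom_shift.
    have e1 : Defs.shift p c r (Cu 0) = p (Cu 0) by rewrite dshift_ne // => E; apply: n1.
    have e2 : Defs.shift p c r (Cv 0) = p (Cv 0) by rewrite dshift_ne // => E; apply: n2.
    rewrite e1 e2; case: hu => [[h1 h2]|[h1 h2]]; [left|right]; split => //; lra.
  rewrite -(hD _ hq) DxS_fin //.
  rewrite [X in _ = _ + X + _]big1 ?addr0; last first.
    by move=> j _; rewrite (hJ j).1 // (hJ j).2 // !mulr0 addr0.
  rewrite /P hornerD hornerC horner_sum hpd //; congr (_ + _).
  by apply: eq_bigr => b _; rewrite hornerZ XP_horner hpd // mulrC.
have hP0 : P = 0.
  apply/eqP; apply: contraT => hP.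
  set d : R := if p (Cu 0) < p (Cv 0) then -1 else 1.
  have hd : d != 0 by rewrite /d; case: ifP => _; rewrite ?oppr_eq0 oner_eq0.
  set rs := [seq p (Cu 0) + d * (i.+1)%:R | i <- iota 0 (size P)].
  have := @max_poly_roots _ P rs hP.
  rewrite size_map size_iota ltnn; apply.
  - apply/allP => x /mapP[i _ ->]; apply/eqP; apply: hroot.
    have hi : (0:R) < (i.+1)%:R by rewrite ltr0Sn.
    rewrite /d; case: ifP => h; [left|right].
      by split => //; lra.
    have h' : p (Cv 0) < p (Cu 0).
      rewrite lt_neqAle; apply/andP; split; last by rewrite leNgt h.
      by apply/eqP => E; apply: hp; rewrite E.
    by split => //; lra.
  - rewrite map_inj_uniq ?iota_uniq // => i j /addrI /(mulfI hd) /eqP.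
    by rewrite eqr_nat eqSS => /eqP.
have : P`_a.+1 = pd (Cpsi a) G p.
  rewrite /P coefD coefC /= add0r coef_sum.
  rewrite -(@sum_if _ (fun b => pd (Cpsi b) G p) _ _ ha); apply: eq_bigr => b _.
  rewrite coefZ; case: (ltngtP b a) => hba.
  - by rewrite XP_coef_hi ?ltnS // mulr0 ?ltn_eqF.
  - by rewrite (hb b hba p hp) mul0r ?gtn_eqF.
  - by rewrite hba XP_coef_top mulr1.
move=> <-; rewrite -/P hP0; exact: coef0.
Unshelve. all: by end_near. Qed.

Lemma stepC_all : (forall q, Dom q -> DxS G q = 0) ->
  forall a, Z (Cpsi a).
Proof.
move=> hD; have hJ := stepA_all hD.
suff H : forall n a, (bnd cs <= a + n)%N -> Z (Cpsi a).
  by move=> a; apply: (H (bnd cs)); rewrite leq_addl.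
elim=> [|n IH] a ha.
  by rewrite addn0 in ha; apply: Z_notin; apply: notin_bnd => /=; rewrite ltnS.
apply: stepC => // b hb; apply: IH; lia.
Qed.

Lemma Z_all : (forall q, Dom q -> DxS G q = 0) -> (forall q, Dom q -> DyS G q = 0) ->
  forall c, Z c.
Proof.
move=> hD hDy.
have hJ := stepA_all hD; have hS := stepC_all hD.
case=> [||i|i|a]; try by [apply: (hJ i).1 | apply: (hJ i).2 | apply: hS].
- move=> p hp; have := hD p hp; rewrite DxS_fin //.
  rewrite [X in _ + X + _]big1; last by move=> j _; rewrite (hJ j).1 // (hJ j).2 // !mulr0 addr0.
  by rewrite big1 ?addr0 // => b _; rewrite (hS b) // mulr0.
- move=> p hp; have := hDy p hp; rewrite /DyS.
  rewrite (@limn_fin _ (fun i => iter i (@Dx0 R) (@fu R) p * pd (Cu i) G p + iter i (@Dx0 R) (@fv R) p * pd (Cv i) G p) 0); last first.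
    by move=> i _; rewrite (hJ i).1 // (hJ i).2 // !mulr0 addr0.
  rewrite (@limn_fin _ (fun a => Yc (a + 3)%N p * pd (Cpsi a) G p) 0); last first.
    by move=> a _; rewrite (hS a) // mulr0.
  by rewrite !big_ord0 !addr0.
Qed.

Lemma agree p q : (forall c, Z c) -> Dom p -> Dom q ->
  p (Cu 0) = q (Cu 0) -> p (Cv 0) = q (Cv 0) -> G p = G q.
Proof.
move=> hZ hp hq hu hv.
pose upd l := foldr (fun c r => Defs.shift r c (q c - r c)) p l.
have H : forall l, [/\ Dom (upd l), G (upd l) = G p, upd l (Cu 0) = p (Cu 0),
   upd l (Cv 0) = p (Cv 0) & forall c, List.In c l -> upd l c = q c].
  elim=> [|c l [h1 h2 h3 h4 h5]] /=; first by split.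
  rewrite -/(upd l).
  case: (Coord_eq_dec c (Cu 0)) => [E|n1].
    subst c.
    have -> : q (Cu 0) - upd l (Cu 0) = 0 by rewrite h3 hu subrr.
    rewrite dshift0; split => //.
    by move=> c' [<-|hc']; [rewrite h3 hu | exact: h5].
  case: (Coord_eq_dec c (Cv 0)) => [E|n2].
    subst c.
    have -> : q (Cv 0) - upd l (Cv 0) = 0 by rewrite h4 hv subrr.
    rewrite dshift0; split => //.
    by move=> c' [<-|hc']; [rewrite h4 hv | exact: h5].
  have n1' : Cu 0 <> c by move=> E; apply: n1.
  have n2' : Cv 0 <> c by move=> E; apply: n2.
  split.
  - by apply/dom_shift.
  - by rewrite inv_gen.
  - by rewrite dshift_ne.
  - by rewrite dshift_ne.
  - move=> c' [<-|hc']; first by rewrite dshift_eq addrC subrK.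
    case: (Coord_eq_dec c' c) => [->|ne]; first by rewrite dshift_eq addrC subrK.
    by rewrite dshift_ne // h5.
have [h1 h2 _ _ h5] := H cs.
rewrite -h2 hG // (hG hq); congr g; apply/rowP => i; rewrite !mxE h5 //; exact: nth_In.
Qed.

Lemma inv_v0 p t : Z (Cv 0) -> Dom p ->
  (p (Cu 0) < p (Cv 0) /\ p (Cu 0) < p (Cv 0) + t) \/
  (p (Cv 0) < p (Cu 0) /\ p (Cv 0) + t < p (Cu 0)) ->
  G (Defs.shift p (Cv 0) t) = G p.
Proof.
move=> hz hp hs; apply: Lgen => // s hs'; apply/domv => E.
by case: hs => [[a b]|[a b]]; case: hs' => /andP[c d]; lra.
Qed.

Lemma half_const p q : (forall c, Z c) -> Dom p -> Dom q ->
  (p (Cu 0) < p (Cv 0)) = (q (Cu 0) < q (Cv 0)) -> G p = G q.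
Proof.
move=> hZ hp hq hs.
have n1 : forall x : R, - `|x| <= x by move=> x; have := ler_norm (- x); rewrite normrN lerNl.
have n2 : forall x : R, x <= `|x| by move=> x; exact: ler_norm.
have hpd : p (Cu 0) <> p (Cv 0) := hp.
have hqd : q (Cu 0) <> q (Cv 0) := hq.
case: (ltP (p (Cu 0)) (p (Cv 0))) => hp' in hs *.
- have hq' : q (Cu 0) < q (Cv 0) by rewrite -hs.
  set m : R := - (`|p (Cu 0)| + `|q (Cu 0)|) - 1.
  have hm : m = - (`|p (Cu 0)| + `|q (Cu 0)|) - 1 by [].
  have z1 := normr_ge0 (p (Cu 0)); have z2 := normr_ge0 (q (Cu 0)).
  have m1 := n1 (p (Cu 0)); have m2 := n1 (q (Cu 0)).
  set p1 := Defs.shift p (Cu 0) (m - p (Cu 0)).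
  have e1u : p1 (Cu 0) = m by rewrite /p1 dshift_eq addrC subrK.
  have e1v : p1 (Cv 0) = p (Cv 0) by rewrite /p1 dshift_ne.
  have g1 : G p1 = G p by apply: inv_u0 => //; left; split => //; lra.
  have hp1 : Dom p1 by move=> E; rewrite e1u e1v in E; lra.
  set p2 := Defs.shift p1 (Cv 0) (q (Cv 0) - p (Cv 0)).
  have e2u : p2 (Cu 0) = m by rewrite /p2 dshift_ne.
  have e2v : p2 (Cv 0) = q (Cv 0) by rewrite /p2 dshift_eq e1v addrC subrK.
  have g2 : G p2 = G p1 by apply: inv_v0 => //; left; rewrite e1u e1v; split; lra.
  have hp2 : Dom p2 by move=> E; rewrite e2u e2v in E; lra.
  set p3 := Defs.shift p2 (Cu 0) (q (Cu 0) - m).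
  have e3u : p3 (Cu 0) = q (Cu 0) by rewrite /p3 dshift_eq e2u addrC subrK.
  have e3v : p3 (Cv 0) = q (Cv 0) by rewrite /p3 dshift_ne.
  have g3 : G p3 = G p2 by apply: inv_u0 => //; left; rewrite e2u e2v; split; lra.
  have hp3 : Dom p3 by move=> E; rewrite e3u e3v in E; apply: hq.
  by rewrite -g1 -g2 -g3; apply: agree.
- have hp'' : p (Cv 0) < p (Cu 0) by rewrite lt_neqAle hp' andbT; apply/eqP => E; apply: hpd.
  have hq1 : q (Cv 0) <= q (Cu 0) by rewrite leNgt -hs.
  have hq' : q (Cv 0) < q (Cu 0).
    by rewrite lt_neqAle hq1 andbT; apply/eqP => E; apply: hqd; rewrite E.
  set m : R := `|p (Cu 0)| + `|q (Cu 0)| + 1.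
  have hm : m = `|p (Cu 0)| + `|q (Cu 0)| + 1 by [].
  have z1 := normr_ge0 (p (Cu 0)); have z2 := normr_ge0 (q (Cu 0)).
  have m1 := n2 (p (Cu 0)); have m2 := n2 (q (Cu 0)).
  have m3 := n1 (p (Cu 0)); have m4 := n1 (q (Cu 0)).
  set p1 := Defs.shift p (Cu 0) (m - p (Cu 0)).
  have e1u : p1 (Cu 0) = m by rewrite /p1 dshift_eq addrC subrK.
  have e1v : p1 (Cv 0) = p (Cv 0) by rewrite /p1 dshift_ne.
  have g1 : G p1 = G p by apply: inv_u0 => //; right; split => //; lra.
  have hp1 : Dom p1 by move=> E; rewrite e1u e1v in E; lra.
  set p2 := Defs.shift p1 (Cv 0) (q (Cv 0) - p (Cv 0)).
  have e2u : p2 (Cu 0) = m by rewrite /p2 dshift_ne.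
  have e2v : p2 (Cv 0) = q (Cv 0) by rewrite /p2 dshift_eq e1v addrC subrK.
  have g2 : G p2 = G p1 by apply: inv_v0 => //; right; rewrite e1u e1v; split; lra.
  have hp2 : Dom p2 by move=> E; rewrite e2u e2v in E; lra.
  set p3 := Defs.shift p2 (Cu 0) (q (Cu 0) - m).
  have e3u : p3 (Cu 0) = q (Cu 0) by rewrite /p3 dshift_eq e2u addrC subrK.
  have e3v : p3 (Cv 0) = q (Cv 0) by rewrite /p3 dshift_ne.
  have g3 : G p3 = G p2 by apply: inv_u0 => //; right; rewrite e2u e2v; split; lra.
  have hp3 : Dom p3 by move=> E; rewrite e3u e3v in E; apply: hq.
  by rewrite -g1 -g2 -g3; apply: agree.
Qed.

End WithG.
End Core1.


Section Main.
Variable R : realType.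
Implicit Types (p q : Pt R) (c : Coord).

Lemma const_of (G : Pt R -> R) : smoothfun G ->
  (forall q, Dom q -> DxS G q = 0) -> (forall q, Dom q -> DyS G q = 0) ->
  exists c1 c2 : R, forall p, Dom p -> G p = if p (Cu 0) < p (Cv 0) then c1 else c2.
Proof.
move=> [cs [_ [g [hG hsm]]]] hD hDy.
have hder : forall p v, Dom p -> derivable g (restr cs p) v.
  move=> p v hp; have [_ ] := hsm [::] (restr cs p) (ex_intro2 _ _ p hp erefl).
  by apply.
have hZ := Z_all hG hder hD hDy.
pose r1 : Pt R := fun c => match c with Cv 0 => 1 | _ => 0 end.
pose r2 : Pt R := fun c => match c with Cu 0 => 1 | _ => 0 end.
have hr1 : Dom r1 by rewrite /Dom /r1 => /eqP; rewrite eq_sym oner_eq0.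
have hr2 : Dom r2 by rewrite /Dom /r2 => /eqP; rewrite oner_eq0.
exists (G r1), (G r2) => p hp; case: ifP => h.
- apply: (half_const hG hder hZ hp hr1); by rewrite h /r1 ltr01.
- apply: (half_const hG hder hZ hp hr2); rewrite h /r2; apply/esym/negbTE; by rewrite -leNgt ler01.
Qed.

Definition gc (w : 'rV[R]_1) : R := w 0 0.

Lemma gc_cvg (v x : 'rV[R]_1) :
  (fun h : R => h^-1 *: ((gc \o shift x) (h *: v) - gc x)) @ 0^' --> v 0 0.
Proof.
apply: cvg_near_cst; near=> h.
rewrite /gc /= !mxE addrK [X in X = _]mulrA mulVf ?mul1r //.
near: h; exact: nbhs_dnbhs_neq.
Unshelve. all: by end_near. Qed.

Lemma gc_der (v x : 'rV[R]_1) : derivable gc x v /\ 'D_v gc x = v 0 0.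
Proof.
split; first by apply/cvg_ex; exists (v 0 0); exact: gc_cvg.
rewrite /derive; apply: cvg_lim; [exact: Rhausdorff | exact: gc_cvg].
Qed.

Lemma iterD_cases (vs : seq 'rV[R]_1) :
  Defs.iterD vs gc = gc \/ exists c : R, Defs.iterD vs gc = fun _ => c.
Proof.
elim: vs => [|v vs [E|[c E]]]; first by left.
- have step : Defs.iterD (v :: vs) gc = fun x => 'D_v (Defs.iterD vs gc) x by [].
  right; exists (v 0 0); rewrite step E; apply/funext => x; exact: (gc_der v x).2.
- have step : Defs.iterD (v :: vs) gc = fun x => 'D_v (Defs.iterD vs gc) x by [].
  right; exists 0; rewrite step E; apply/funext => x; exact: derive_cst.
Qed.

Lemma smooth_coord j : smoothfun (fun q : Pt R => q (Cpsi j)).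
Proof.
exists [:: Cpsi j]; split; first by constructor; [by [] | constructor].
exists gc; split; first by move=> p _; rewrite /gc /restr mxE.
move=> vs x _; case: (iterD_cases vs) => [->|[c ->]]; split.
- exact: coord_continuous.
- by move=> v; exact: (gc_der v x).1.
- exact: cst_continuous.
- move=> v; exact: derivable_cst.
Qed.

Lemma pd_coord c0 c q :
  pd c (fun q : Pt R => q c0) q = if Coord_eq_dec c0 c then 1 else 0.
Proof.
rewrite /pd; case: Coord_eq_dec => [E|ne].
- have -> : (fun t => Defs.shift q c t c0) = shift (q c0).
    by apply/funext => t; rewrite dshiftE; case: Coord_eq_dec => [E'|E'] //; rewrite addrC.
  have hh := @is_derive_shift R 0 1 (q c0); rewrite derive1E; exact: (@derive_val _ _ _ _ _ _ _ hh).
- have -> : (fun t => Defs.shift q c t c0) = cst (q c0).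
    by apply/funext => t; rewrite dshift_ne.
  exact: derive1_cst.
Qed.

Lemma pd_coord_psi a j q :
  pd (Cpsi a) (fun q : Pt R => q (Cpsi j)) q = if a == j then 1 else 0.
Proof.
rewrite pd_coord; destruct (Coord_eq_dec (Cpsi j) (Cpsi a)) as [E|ne]; cbn [is_left].
  by injection E as E1; rewrite E1 eqxx.
by case: eqP => // E; case: ne; rewrite E.
Qed.

Lemma sum_coord (f : nat -> R) j q :
  limn (fun N => \sum_(a < N) f a * pd (Cpsi a) (fun q : Pt R => q (Cpsi j)) q) = f j.
Proof.
rewrite (@limn_fin _ (fun a => f a * pd (Cpsi a) (fun q : Pt R => q (Cpsi j)) q) j.+1).
- rewrite -(@sum_if _ f j.+1 j) //; apply: eq_bigr => a _; rewrite pd_coord_psi.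
  by case: eqP => _; rewrite ?mulr1 ?mulr0.
- move=> a ha; rewrite pd_coord_psi; case: eqP => [E|_]; last by rewrite mulr0.
  by rewrite E ltnn in ha.
Qed.

Lemma pd_coord0 c j q : c <> Cpsi j -> pd c (fun q : Pt R => q (Cpsi j)) q = 0.
Proof. by move=> h; rewrite pd_coord; case: Coord_eq_dec => // E; case: h. Qed.

Lemma Sact_coord (Psi : nat -> Pt R -> R) j :
  Sact Psi (fun q : Pt R => q (Cpsi j)) = Psi (j + 3)%N.
Proof. by apply/funext => q; rewrite /Sact (sum_coord (fun a => Psi (a + 3)%N q)). Qed.

Lemma Dx0_coord j q : Dx0 (fun q : Pt R => q (Cpsi j)) q = 0.
Proof.
rewrite /Dx0 pd_coord0 // add0r.
rewrite (@limn_fin _ (fun i => q (Cu i.+1) * pd (Cu i) (fun q : Pt R => q (Cpsi j)) q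
   + q (Cv i.+1) * pd (Cv i) (fun q : Pt R => q (Cpsi j)) q) 0) ?big_ord0 //.
by move=> i _; rewrite !pd_coord0 // !mulr0 addr0.
Qed.

Lemma DxS_coord j : DxS (fun q : Pt R => q (Cpsi j)) = Xc (j + 3).
Proof.
apply/funext => q; rewrite /DxS Dx0_coord add0r.
exact: (sum_coord (fun a => Xc (a + 3)%N q)).
Qed.

Lemma DyS_coord j : DyS (fun q : Pt R => q (Cpsi j)) = Yc (j + 3).
Proof.
apply/funext => q; rewrite /DyS pd_coord0 // add0r.
rewrite (@limn_fin _ (fun i => iter i (@Dx0 R) (@fu R) q * pd (Cu i) (fun q : Pt R => q (Cpsi j)) q
   + iter i (@Dx0 R) (@fv R) q * pd (Cv i) (fun q : Pt R => q (Cpsi j)) q) 0) ?big_ord0 ?add0r.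
  exact: (sum_coord (fun a => Yc (a + 3)%N q)).
by move=> i _; rewrite !pd_coord0 // !mulr0 addr0.
Qed.

Lemma psi_shift_psi p a t i : (1 <= i)%N -> (i < a + 3)%N ->
  psi i (Defs.shift p (Cpsi a) t) = psi i p.
Proof.
case: i => [|[|[|i]]] //= _ h; rewrite dshift_ne // => -[E]; lia.
Qed.

Lemma Xc_shift_psi m p a t : (m <= a + 4)%N ->
  Xc m (Defs.shift p (Cpsi a) t) = Xc m p.
Proof.
move=> h; rewrite /Xc /sigma !dshift_ne //; congr (_ - _).
apply: eq_big_nat => i /andP[h1 h2].
by rewrite ?dshift_ne // psi_shift_psi //; lia.
Qed.

Lemma Yc_shift_psi m p a t : (3 <= m)%N -> (m <= a + 4)%N ->
  Yc m (Defs.shift p (Cpsi a) t) = Yc m p.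
Proof.
move=> h1 h2; rewrite /Yc !dshift_ne // Xc_shift_psi; last lia.
by rewrite psi_shift_psi //; lia.
Qed.

Lemma Sact_zero (Psi : nat -> Pt R -> R) k (H : Pt R -> R) p :
  (forall a, (a < k)%N -> forall p, Psi a p = 0) ->
  (forall a t, (k <= a + 3)%N -> H (Defs.shift p (Cpsi a) t) = H p) ->
  Sact Psi H p = 0.
Proof.
move=> hlow hH; rewrite /Sact.
rewrite (@limn_fin _ (fun a => Psi (a + 3)%N p * pd (Cpsi a) H p) 0) ?big_ord0 // => a _.
case: (ltnP (a + 3) k) => h; first by rewrite hlow // mul0r.
rewrite /pd (_ : (fun t => H (Defs.shift p (Cpsi a) t)) = cst (H p)).
  by rewrite derive1_cst mulr0.
by apply/funext => t; rewrite hH.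
Qed.

End Main.

Theorem mainTheorem4 (R : realType) (k : nat) (Psi : nat -> Pt R -> R) :
  (3 <= k)%N ->
  (forall a, (a < k)%N -> forall p, Psi a p = 0) ->
  (forall a, (k <= a)%N -> smoothfun (Psi a)) ->
  (forall F, smoothfun F -> forall p, Dom p ->
     Sact Psi (DxS F) p = DxS (Sact Psi F) p) ->
  (forall F, smoothfun F -> forall p, Dom p ->
     Sact Psi (DyS F) p = DyS (Sact Psi F) p) ->
  exists c1 c2 d1 d2 : R, forall p : Pt R, Dom p ->
    Psi k p = (if p (Cu 0) < p (Cv 0) then c1 else c2) /\
    Psi k.+1 p = (if p (Cu 0) < p (Cv 0) then d1 else d2).
Proof.
move=> hk hlow hsm hX hY.
have key : forall j, (k <= j + 3)%N -> (j + 3 <= k.+1)%N ->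
  exists c1 c2 : R, forall p, Dom p ->
    Psi (j + 3)%N p = if p (Cu 0) < p (Cv 0) then c1 else c2.
  move=> j h1 h2; apply: const_of; first exact: hsm.
  - move=> p hp; have := hX _ (smooth_coord R j) p hp.
    rewrite (DxS_coord R j) Sact_coord => <-.
    apply: (Sact_zero hlow) => a t ha; apply: Xc_shift_psi; lia.
  - move=> p hp; have := hY _ (smooth_coord R j) p hp.
    rewrite (DyS_coord R j) Sact_coord => <-.
    apply: (Sact_zero hlow) => a t ha; apply: Yc_shift_psi; lia.
have [c1 [c2 H1]] := key (k - 3)%N ltac:(lia) ltac:(lia).
have [d1 [d2 H2]] := key (k - 2)%N ltac:(lia) ltac:(lia).
have e1 : (k - 3 + 3 = k)%N by lia.
have e2 : (k - 2 + 3 = k.+1)%N by lia.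
rewrite e1 in H1; rewrite e2 in H2.
exists c1, c2, d1, d2 => p hp; split; [exact: H1 | exact: H2].
Qed.
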